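(* Let $X$ be a compact Hausdorff space, $\mathcal F$ a left ultrafunctor from $X$ to $\mathsf{k\text{-}CompMet}$, and $E=\coprod_{x\in X}\mathcal F(x)$ with the topology $\tau$. A subset $C\subseteq E$, written $C=\coprod_{x\in X}U(x)$ with $U(x)=C\cap\mathcal F(x)$, is $\tau$-open if and only if: for every ultrafilter $\mu$ on $X$ converging to a point $x\in\pi(C)$ and every $g\in U(x)$, if $(b_y)_{y\in X}$ is a representative of $\sigma_\mu(g)\in\int_X\mathcal F(y)\,d\mu$, then there exist $W\in\mu$ and $\epsilon>0$ such that $B(b_y,\epsilon)\subseteq U(y)$ for all $y\in W$ (i.e. $\coprod_{y\in W}B(b_y,\epsilon)\subseteq C$). (The existence of such $W,\epsilon$ does not depend on the representative.)
   Context: Ultrafilter conventions: pushforward $g\mu=\{B:g^{-1}(B)\in\mu\}$; for compact Hausdorff $X$, $\int_Sx_sd\mu$ is the limit of the pushforward of $\mu$ along $s\mapsto x_s$; $\int_S\nu_sd\mu$ is the ultrafilter with $B\in\int_S\nu_sd\mu$ iff $\{s:B\in\nu_s\}\in\mu$. $\mathsf{k\text{-}CompMet}$: complete metric spaces with distances $\le k$, 1-Lipschitz maps; metric ultraproduct $\int_SM_sd\mu=\prod M_s/\{\lim_\mu d(a_s,b_s)=0\}$ with metric $\lim_\mu d(a_s,b_s)$. A left ultrafunctor $\mathcal F$ from $X$ to $\mathsf{k\text{-}CompMet}$ assigns objects $\mathcal F(x)$ and 1-Lipschitz maps $\sigma_\mu:\mathcal F(\int_Sx_sd\mu)\to\int_S\mathcal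 F(x_s)d\mu$ for all sets $S$, families $(x_s)$ in $X$ and ultrafilters $\mu$ on $S$, compatible with principal ultrafilters and with the Fubini maps $\Delta((b_t)_t)=((b_t)_t)_s$ (i.e. $\Delta\circ\sigma_{\int_S\nu_sd\mu}=(\int_S\sigma_{\nu_s}d\mu)\circ\sigma_\mu$). For an ultrafilter $\mu$ on $X$, $\sigma_\mu$ refers to the identity family on $X$. $\tau$ is the unique topology on $E$ in which an ultrafilter $\eta$ on $E$ converges to $f$ iff $\pi\eta$ converges to $\pi(f)$ and, for a representative $(b_x)$ of $\sigma_{\pi\eta}(f)$, $\coprod_xB(b_x,\epsilon)\in\eta$ for all $\epsilon>0$. $B(b,\epsilon)$ is the open metric ball in the fibre containing $b$. *)

(* Defs.v *)
From HB Require Import structures.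
From mathcomp Require Import all_boot all_order all_algebra.
From mathcomp Require Import all_classical all_reals topology normedtype.
Set Implicit Arguments. Unset Strict Implicit. Unset Printing Implicit Defensive.
Import Order.TTheory GRing.Theory Num.Theory.
Local Open Scope classical_set_scope.
Local Open Scope ring_scope.

Definition is_ultrafilter (S : Type) (U : set_system S) : Prop :=
  [/\ U setT, ~ U set0,
      (forall A B, U A -> U B -> U (A `&` B)),
      (forall A B : set S, A `<=` B -> U A -> U B) &
      (forall A : set S, U A \/ U (~` A))].

Definition upush (S T : Type) (g : S -> T) (mu : set_system S) : set_system T :=
  [set B | mu (g @^-1` B)].

Definition principal (S : Type) (s0 : S) : set_system S := [set A | A s0].

Definition uintegral (S T : Type) (nu : S -> set_system T) (mu : set_system S)
  : set_system T := [set B | mu [set s | nu s B]].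

Definition uconv (X : topologicalType) (mu : set_system X) (x : X) : Prop :=
  mu --> x.

Definition is_ulimR (R : realType) (S : Type) (mu : set_system S) (f : S -> R) (r : R)
  : Prop := forall e : R, 0 < e -> mu [set s | `|f s - r| < e].
Definition ulimR (R : realType) (S : Type) (mu : set_system S) (f : S -> R) : R :=
  xget 0 (is_ulimR mu f).

Record kCompMet (R : realType) (k : R) := KCompMet {
  cm_car :> Type;
  cm_d : cm_car -> cm_car -> R;
  cm_d_ge0 : forall a b, 0 <= cm_d a b;
  cm_d_lek : forall a b, cm_d a b <= k;
  cm_d_eq0 : forall a b, cm_d a b = 0 <-> a = b;
  cm_d_sym : forall a b, cm_d a b = cm_d b a;
  cm_d_tri : forall a b c, cm_d a c <= cm_d a b + cm_d b c;
  cm_complete : forall u : nat -> cm_car,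
    (forall e : R, 0 < e -> exists N : nat, forall m n : nat,
        (N <= m)%N -> (N <= n)%N -> cm_d (u m) (u n) < e) ->
    exists l : cm_car, forall e : R, 0 < e -> exists N : nat,
        forall n : nat, (N <= n)%N -> cm_d (u n) l < e
}.
Arguments cm_d {R k} _ _ _.

Section Ultrafunctor.
Variables (R : realType) (k : R) (X : topologicalType) (F : X -> kCompMet k).

(* Elements of the metric ultraproduct int_S F(x_s) dmu are represented by
   families a : forall s, F (xs s); two families represent the same element
   iff lim_mu d(a_s, b_s) = 0.  [urep mu a b] : b is a representative of the
   class of a. *)
Definition urep (S : Type) (xs : S -> X) (mu : set_system S)
  (a b : forall s, F (xs s)) : Prop :=
  ulimR mu (fun s => cm_d (F (xs s)) (a s) (b s)) = 0.
Arguments urep : clear implicits.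
Arguments urep {S} xs mu a b.

(* Data of the structure maps: [sigma S xs mu x g] is a representative of
   sigma_mu(g), for g in F(x), where x is meant to be int_S x_s dmu (the
   constraints below only concern that case). *)
Definition sigma_data : Type :=
  forall (S : Type) (xs : S -> X) (mu : set_system S) (x : X),
    F x -> forall s, F (xs s).

Definition is_left_ultrafunctor (sigma : sigma_data) : Prop :=
  (forall (S : Type) (xs : S -> X) (mu : set_system S) (x : X),
      is_ultrafilter mu -> uconv (upush xs mu) x ->
      forall g h : F x,
        ulimR mu (fun s => cm_d (F (xs s)) (sigma S xs mu x g s) (sigma S xs mu x h s))
          <= cm_d (F x) g h)
  /\
  (* compatibility with principal ultrafilters:
     sigma_{delta_s0} is the canonical identification F(x_s0) = int F(x_s) d delta_s0 *)
  (forall (S : Type) (xs : S -> X) (s0 : S) (g : F (xs s0)),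
      sigma S xs (principal s0) (xs s0) g s0 = g)
  /\
  (* compatibility with the Fubini maps:
     Delta o sigma_{int nu_s dmu} = (int_S sigma_{nu_s} dmu) o sigma_mu *)
  (forall (S T : Type) (mu : set_system S) (nu : S -> set_system T)
          (xs : T -> X) (ys : S -> X) (x : X),
      is_ultrafilter mu -> (forall s, is_ultrafilter (nu s)) ->
      (forall s, uconv (upush xs (nu s)) (ys s)) ->
      uconv (upush ys mu) x ->
      forall g : F x,
        ulimR mu (fun s => ulimR (nu s) (fun t =>
          cm_d (F (xs t))
            (sigma T xs (uintegral nu mu) x g t)
            (sigma T xs (nu s) (ys s) (sigma S ys mu x g s) t))) = 0).

Definition Etot : Type := {x : X & F x}.

Definition coprod_balls (W : set X) (b : forall y, F y) (e : R) : set Etot :=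
  [set f | W (projT1 f) /\ cm_d (F (projT1 f)) (b (projT1 f)) (projT2 f) < e].

Definition tau_conv (sigma : sigma_data) (eta : set_system Etot) (f : Etot) : Prop :=
  uconv (upush (@projT1 X (fun x => F x)) eta) (projT1 f) /\
  forall b : forall y, F y,
    urep (fun y => y) (upush (@projT1 X (fun x => F x)) eta)
      (sigma X (fun y => y) (upush (@projT1 X (fun x => F x)) eta) (projT1 f) (projT2 f)) b ->
    forall e : R, 0 < e -> eta (coprod_balls setT b e).

(* open sets of tau: the topology whose ultrafilter convergence is tau_conv
   (a set is open iff it belongs to every ultrafilter converging to one of
   its points) *)
Definition tau_open (sigma : sigma_data) (C : set Etot) : Prop :=
  forall (eta : set_system Etot) (f : Etot),
    is_ultrafilter eta -> C f -> tau_conv sigma eta f -> eta C.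

End Ultrafunctor.
Arguments urep {R k X F S} xs mu a b.

(* Main.v *)
Require Import Defs.
From HB Require Import structures.
From mathcomp Require Import all_boot all_order all_algebra.
From mathcomp Require Import all_classical all_reals topology normedtype.
Import Order.TTheory GRing.Theory Num.Theory.
Local Open Scope classical_set_scope.
Local Open Scope ring_scope.
Set Implicit Arguments. Unset Strict Implicit.
Import numFieldNormedType.Exports.

Lemma is_uf_Ultra (S : Type) (mu : set_system S) :
  is_ultrafilter mu -> UltraFilter mu.
Proof.
case=> hT h0 hI hS hU.
have PF : ProperFilter mu.
  by split => //; split => //; move=> A B; exact: hI.
split => // G PG sub.
rewrite eqEsubset; split => // A GA.
case: (hU A) => // /sub GC.
exfalso; apply: (filter_not_empty G).
by rewrite -(setICr A); apply: filterI.
Qed.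

Lemma upush_uf (S T : Type) (f : S -> T) (mu : set_system S) :
  is_ultrafilter mu -> is_ultrafilter (upush f mu).
Proof.
case=> hT h0 hI hS hU; split.
- by rewrite /upush /=; rewrite preimage_setT.
- by rewrite /upush /= preimage_set0.
- by move=> A B; rewrite /upush /= preimage_setI; exact: hI.
- by move=> A B AB; rewrite /upush /=; apply: hS; exact: preimage_subset.
- by move=> A; rewrite /upush /= preimage_setC; exact: hU.
Qed.

Lemma ulim_exists (R : realType) (k : R) (S : Type) (mu : set_system S) (f : S -> R) :
  is_ultrafilter mu -> (forall s, 0 <= f s <= k) -> exists r, is_ulimR mu f r.
Proof.
move=> mu_uf fb.
have U := is_uf_Ultra (upush_uf f mu_uf).
have := @segment_compact R 0 k.
rewrite compact_ultra /= => /(_ _ U).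
case.
  case: mu_uf => hT _ _ hS _; rewrite /upush /=; apply: hS hT => s _ /=.
  by rewrite in_itv /=.
move=> p [_ cv]; exists p => e e0.
have : nbhs p (ball p e) by apply/nbhs_ballP; exists e.
move/cv; rewrite /upush /=.
case: mu_uf => _ _ _ hS _; apply: hS => s /=.
by rewrite -ball_normE /= distrC.
Qed.

Lemma ulim_unique (R : realType) (S : Type) (mu : set_system S) (f : S -> R) r :
  is_ultrafilter mu -> is_ulimR mu f r -> ulimR mu f = r.
Proof.
move=> [hT h0 hI hS hU] hr.
have hx : is_ulimR mu f (ulimR mu f) by apply: xgetPex; exists r.
set r' := ulimR mu f in hx *.
apply/eqP; rewrite -subr_eq0; apply: contrapT => /negP ne.
have e0 : 0 < `|r' - r| / 2 by rewrite divr_gt0 // normr_gt0.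
have := hI _ _ (hx _ e0) (hr _ e0).
case: (pselect (exists s, `|f s - r'| < `|r' - r| / 2 /\ `|f s - r| < `|r' - r| / 2)).
  move=> [s [h1 h2]] _.
  have : `|r' - r| < `|r' - r| / 2 + `|r' - r| / 2.
    rewrite (le_lt_trans (y := `|r' - f s| + `|f s - r|)) //.
      by rewrite -(subrKA (f s)) ler_normD.
    by rewrite ltrD // distrC.
  by rewrite -splitr ltxx.
move=> nex H; apply: h0.
suff -> : set0 = [set s | `|f s - r'| < `|r' - r| / 2] `&` [set s | `|f s - r| < `|r' - r| / 2] by [].
apply/esym; rewrite -subset0 => s [h1 h2]; apply: nex; by exists s.
Qed.

From mathcomp Require Import lra.

Lemma uf_sub_eq (S : Type) (mu nu : set_system S) :
  is_ultrafilter mu -> is_ultrafilter nu -> mu `<=` nu -> nu = mu.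
Proof.
move=> [_ _ _ _ hU] [_ h0 hI _ _] sub; rewrite eqEsubset; split => // A nA.
case: (hU A) => // /sub nC; exfalso; apply: h0; rewrite -(setICr A); exact: hI.
Qed.

Lemma ulim0 (R : realType) (k : R) (S : Type) (mu : set_system S) (f : S -> R) :
  is_ultrafilter mu -> (forall s, 0 <= f s <= k) -> ulimR mu f = 0 ->
  forall e, 0 < e -> mu [set s | f s < e].
Proof.
move=> uf fb h e e0.
have [r hr] := ulim_exists uf fb.
have := ulim_unique uf hr; rewrite h => r0; subst r.
case: (uf) => _ _ _ hS _; apply: hS (hr e e0) => s /=.
by rewrite subr0 ger0_norm //; case/andP: (fb s).
Qed.

Unset Implicit Arguments.

Theorem theorem3p2 (R : realType) (k : R) (X : topologicalType)
  (hcomp : compact [set: X]) (hhaus : hausdorff_space X)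
  (F : X -> kCompMet k) (sigma : sigma_data F)
  (hF : is_left_ultrafunctor sigma) (C : set (Etot F)) :
  tau_open sigma C <->
  (forall (mu : set_system X) (x : X),
     is_ultrafilter mu -> uconv mu x ->
     forall g : F x, C (existT _ x g) ->
     forall b : forall y, F y,
       urep (fun y => y) mu (sigma X (fun y => y) mu x g) b ->
       exists W : set X, mu W /\
         exists e : R, 0 < e /\
           coprod_balls W b e `<=` C).
Proof.
split; last first.
  move=> H eta [x g] eta_uf Cf [cv hb]; simpl in cv, hb.
  set mu := upush (@projT1 X (fun x => F x)) eta in cv hb.
  have mu_uf : is_ultrafilter mu by exact: upush_uf.
  have rep : urep (fun y => y) mu (sigma X (fun y => y) mu x g)
                                  (sigma X (fun y => y) mu x g).
    rewrite /urep; apply: ulim_unique => // e e0.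
    case: (mu_uf) => hT _ _ hS _; apply: hS hT => s _ /=.
    by rewrite (proj2 (cm_d_eq0 _ _) erefl) subrr normr0.
  have [W [muW [e [e0 sub]]]] := H mu x mu_uf cv g Cf _ rep.
  have := hb _ rep e e0.
  case: (eta_uf) => _ _ hI hS _ hball.
  apply: hS (hI _ _ hball muW) => f [[_ d] Wf]; apply: sub; by split.
move=> Hopen mu x mu_uf cv g Cg b hb; apply: contrapT => Hno.
have Hno' : forall W e, mu W -> 0 < e -> exists f, coprod_balls W b e f /\ ~ C f.
  move=> W e muW e0; apply: contrapT => nf; apply: Hno; exists W; split => //.
  exists e; split => // f fb; apply: contrapT => nC; apply: nf; by exists f.
case: (mu_uf) => muT mu0 muI muS muU.
pose F0 : set_system (Etot F) := [set A | exists W e, mu W /\ 0 < e /\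
   coprod_balls W b e `&` ~` C `<=` A].
have PF0 : ProperFilter F0.
  split.
    move=> [W [e [muW [e0 sub]]]].
    by have [f [h1 h2]] := Hno' W e muW e0; exact: (sub f (conj h1 h2)).
  split.
  - by exists setT, 1; split => //; split => //.
  - move=> A B [W1 [e1 [m1 [p1 s1]]]] [W2 [e2 [m2 [p2 s2]]]].
    exists (W1 `&` W2), (Num.min e1 e2); split; first exact: muI.
    split; first by rewrite lt_min p1 p2.
    move=> f [[[w1 w2] d] nC]; move: d; rewrite lt_min => /andP[d1 d2].
    by split; [apply: s1 | apply: s2]; split.
  - move=> A B AB [W [e [m [p s]]]]; exists W, e; split => //; split => //.
    exact: subset_trans AB.
have [G [GU sub]] := ultraFilterLemma PF0.
have G_uf : is_ultrafilter G.
  split; first exact: filterT.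
  - exact: filter_not_empty.
  - move=> A B; exact: filterI.
  - move=> A B; exact: filterS.
  - move=> A; exact: in_ultra_setVsetC.
have hpush : upush (@projT1 X (fun x => F x)) G = mu.
  apply: uf_sub_eq => //; first exact: upush_uf.
  move=> W muW; apply: sub; exists W, 1; split => //; split => //.
  by move=> f [[Wf _] _].
have GnC : G (~` C).
  apply: sub; exists setT, 1; split => //; split => //; by move=> f [].
have conv : tau_conv sigma G (existT _ x g).
  rewrite /tau_conv /= hpush; split; first exact: cv.
  move=> b' hb' e e0.
  have bd : forall (a a' : forall y, F y) s, 0 <= cm_d (F s) (a s) (a' s) <= k.
    by move=> a a' s; rewrite cm_d_ge0 cm_d_lek.
  have e4 : 0 < e / 4 by rewrite divr_gt0.
  have h1 := ulim0 mu_uf (bd _ _) hb e4.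
  have h2 := ulim0 mu_uf (bd _ _) hb' e4.
  pose D := [set y | cm_d (F y) (b y) (b' y) < e / 2].
  have muD : mu D.
    apply: muS (muI _ _ h1 h2) => y [/= d1 d2].
    have := cm_d_tri (b y) (sigma X (fun y => y) mu x g y) (b' y).
    have := cm_d_sym (b y) (sigma X (fun y => y) mu x g y).
    move=> s t; rewrite /D /=; lra.
  apply: (filterS (P := coprod_balls D b (e / 2))).
    move=> [y c] [/= Dy d]; split => //=.
    have := cm_d_tri (b' y) (b y) c; have := cm_d_sym (b' y) (b y) => s t.
    move: Dy; rewrite /D /= => Dy; lra.
  apply: sub; exists D, (e / 2); split => //; split; first by rewrite divr_gt0.
  by move=> f [].
have GC : G C := Hopen G (existT _ x g) G_uf Cg conv.
apply: (filter_not_empty G); rewrite -(setICr C); exact: filterI.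
Qed.
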